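(* Let $X$ and $Y$ be Banach spaces, let $p\geq 1$ with conjugate exponent $p^*$ (so $\frac1p+\frac1{p^*}=1$, with $p^*=\infty$ when $p=1$), and let $u:X\to Y$ be a continuous linear operator. If the adjoint $u^*:Y^*\to X^*$ is almost $p^*$-summing, then for every $(x_i)_{i=1}^\infty\in Rad(X)$ we have $(u(x_i))_{i=1}^\infty\in \ell_p\langle Y\rangle$.
   Context: $r_i$ denote the Rademacher functions on $[0,1]$. For a Banach space $X$: $Rad(X)$ is the space of sequences $(x_i)\subset X$ with $\|(x_i)\|_{Rad(X)}:=\left(\int_0^1\left\|\sum_{i=1}^\infty r_i(t)x_i\right\|^2dt\right)^{1/2}<\infty$ (almost unconditionally summable sequences). For $1\le s\le\infty$, $\ell_s^w(X)$ is the space of sequences with $\|(x_i)\|_{w,s}:=\sup_{x^*\in B_{X^*}}\|(x^*(x_i))_i\|_{s}<\infty$. For $1\le p\le\infty$, $\ell_p\langle X\rangle$ is the space of sequences $(x_i)\subset X$ with $\sup\{\sum_i|x_i^*(x_i)| : (x_i^* )\in B_{\ell_{p^*}^w(X^* )}\}<\infty$ (Cohen strongly $p$-summable sequences). An operator $v\in\mathcal L(X,Y)$ is almost $s$-summing if there is $C\ge0$ with $\left(\int_0^1\left\|\sum_{i=1}^m r_i(t)v(x_i)\right\|^2dt\right)^{1/2}\le C\|(x_i)_{i=1}^m\|_{w,s}$ for all $m\in\mathbb N$ and $x_1,\dots,x_m\in X$. *)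

(* Defs.v *)
From HB Require Import structures.
From mathcomp Require Import all_boot all_order all_algebra.
From mathcomp Require Import all_classical all_reals all_analysis.
Set Implicit Arguments. Unset Strict Implicit. Unset Printing Implicit Defensive.
Import Order.TTheory GRing.Theory Num.Theory.
Import numFieldNormedType.Exports.
Local Open Scope classical_set_scope.
Local Open Scope ring_scope.

Definition rademacher (R : realType) (n : nat) (t : R) : R :=
  Num.sg (sin (2 ^+ n * pi * t)).

Definition int01 (R : realType) (f : R -> \bar R) : \bar R :=
  (\int[@lebesgue_measure R]_(t in `[0%R, 1%R]) f t)%E.

Definition lp_fin (R : realType) (s : \bar R) (m : nat) (a : 'I_m -> R) : R :=
  match s with
  | r%:E => (\sum_(i < m) (`|a i| `^ r)) `^ r^-1
  | _ => \big[Num.max/0]_(i < m) `|a i|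
  end.

Definition lp_seq (R : realType) (s : \bar R) (a : nat -> R) : \bar R :=
  match s with
  | r%:E => ((\sum_(0 <= i <oo) ((`|a i| `^ r)%:E)) `^ r^-1)%E
  | _ => ereal_sup (range (fun i => (`|a i|)%:E))
  end.

(* weak l_s norm: sup over a "dual unit ball" B of the l_s norm of (phi(x_i)). *)
Definition weak_fin (R : realType) (V : Type) (B : set (V -> R)) (s : \bar R)
  (m : nat) (x : 'I_m -> V) : \bar R :=
  ereal_sup [set (lp_fin s (fun i => phi (x i)))%:E | phi in B].

Definition weak_seq (R : realType) (V : Type) (B : set (V -> R)) (s : \bar R)
  (x : nat -> V) : \bar R :=
  ereal_sup [set lp_seq s (fun i => phi (x i)) | phi in B].

Definition rad_fin (R : realType) (W : lmodType R) (N : W -> R) (m : nat)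
  (w : 'I_m -> W) : \bar R :=
  sqrte (int01 (fun t => ((N (\sum_(i < m) rademacher i.+1 t *: w i)) ^+ 2)%:E)).

(* v : V -> W (on the space D of V) is almost s-summing, where the weak norm
   on V is taken w.r.t. the dual unit ball B and N is the norm of W. *)
Definition almost_summing (R : realType) (V W : lmodType R) (D : set V)
  (B : set (V -> R)) (N : W -> R) (v : V -> W) (s : \bar R) : Prop :=
  exists C : R, 0 <= C /\
    forall (m : nat) (x : 'I_m -> V), (forall i, D (x i)) ->
      (rad_fin N (fun i => v (x i)) <= C%:E * weak_fin B s x)%E.

Definition is_dual (R : realType) (X : normedModType R) (f : X -> R) : Prop :=
  (forall (a : R) (x y : X), f (a *: x + y) = a * f x + f y) /\ continuous f.

Definition dual_norm (R : realType) (X : normedModType R) (f : X -> R) : R :=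
  sup [set `|f x| | x in [set x : X | `|x| <= 1]].

Definition dual_ball (R : realType) (X : normedModType R) : set (X -> R) :=
  [set f | is_dual f /\ dual_norm f <= 1].

Definition bidual_ball (R : realType) (X : normedModType R) : set ((X -> R) -> R) :=
  [set Phi | (forall (a : R) (f g : X -> R), is_dual f -> is_dual g ->
                 Phi (fun x => a * f x + g x) = a * Phi f + Phi g) /\
             (forall f : X -> R, is_dual f -> `|Phi f| <= dual_norm f)].

Definition adjoint (R : realType) (X Y : normedModType R) (u : X -> Y)
  (g : Y -> R) : X -> R := g \o u.

Definition conj_exp (R : realType) (p : R) : \bar R :=
  if p == 1 then +oo%E else (p / (p - 1))%:E.

(* (x_i) in Rad(X): the series sum_i r_i x_i converges in L_2([0,1]; X),
   stated as the Cauchy condition for its partial sums in L_2. *)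
Definition in_Rad (R : realType) (X : normedModType R) (x : nat -> X) : Prop :=
  forall e : R, 0 < e -> exists N : nat, forall m n : nat, (N <= m)%N -> (m <= n)%N ->
    (int01 (fun t => ((`| \sum_(m <= i < n) rademacher i.+1 t *: x i |) ^+ 2)%:E)
       <= e%:E)%E.

Definition strongly_summable (R : realType) (Y : normedModType R) (p : R)
  (y : nat -> Y) : Prop :=
  exists M : R, forall ys : nat -> (Y -> R), (forall i, is_dual (ys i)) ->
    (weak_seq (@bidual_ball R Y) (conj_exp p) ys <= 1)%E ->
    (\sum_(0 <= i <oo) (`| ys i (y i) |)%:E <= M%:E)%E.

(* Main.v *)
Require Import Defs.
Set Warnings "-all".

From HB Require Import structures.
From mathcomp Require Import all_boot all_order all_algebra.
From mathcomp Require Import all_classical all_reals all_analysis.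
From mathcomp Require Import measurable_realfun.
From mathcomp Require Import zify.
From mathcomp Require Import ring lra.
Set Implicit Arguments. Unset Strict Implicit. Unset Printing Implicit Defensive.
Import Order.TTheory GRing.Theory Num.Theory.
Import numFieldNormedType.Exports.
Local Open Scope classical_set_scope.
Local Open Scope ring_scope.
Section Step.
Variable R : realType.
Local Notation mu := (@lebesgue_measure R).

Lemma step_integral (h : R -> R) (a d : R) (c : nat -> R) (K : nat) :
  0 < d ->
  (forall k t, (k < K)%N -> a + k%:R * d < t -> t < a + k.+1%:R * d -> h t = c k) ->
  measurable_fun `[a, a + K%:R * d] (EFin \o h) /\
  (\int[mu]_(t in `[a, (a + K%:R * d)%R]) (h t)%:E = (\sum_(k < K) c k * d)%:E)%E.
Proof.
move=> d0; elim: K => [|K IH] hc.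
  rewrite mul0r addr0 set_itv1 big_ord0; split; first exact: measurable_fun_set1.
  by rewrite integral_set1.
have [IH1 IH2] : measurable_fun `[a, a + K%:R * d] (EFin \o h) /\
  (\int[mu]_(t in `[a, (a + K%:R * d)%R]) (h t)%:E = (\sum_(k < K) c k * d)%:E)%E.
  by apply: IH => k t kK; apply: hc; exact: ltnW.
have le1 : a + K%:R * d <= a + K.+1%:R * d by rewrite lerD2l ler_pM2r// ler_nat.
have le0 : a <= a + K%:R * d by rewrite lerDl mulr_ge0// ltW.
have mo : measurable_fun `]a + K%:R * d, a + K.+1%:R * d[ (EFin \o h).
  apply: (@eq_measurable_fun _ _ _ _ _ (cst (c K)%:E)); last exact: measurable_cst.
  move=> t; rewrite inE /= in_itv /= => /andP[t1 t2].
  by rewrite (hc K t).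
have E : [set` `[a, a + K.+1%:R * d]] = [set` `[a, a + K%:R * d]] `|` [set` `]a + K%:R * d, a + K.+1%:R * d]] :> set R.
  by rewrite -itv_bndbnd_setU// bnd_simp.
have mc : measurable_fun `]a + K%:R * d, a + K.+1%:R * d] (EFin \o h).
  rewrite (@itv_bndbnd_setU _ _ (BRight (a + K%:R * d)) (BLeft (a + K.+1%:R * d)) (BRight (a + K.+1%:R * d))) ?bnd_simp//; last by rewrite ltrD2l ltr_pM2r// ltr_nat.
  rewrite set_itv1; apply/measurable_funU => //; split => //.
  exact: measurable_fun_set1.
rewrite E; split.
  by apply/measurable_funU => //.
rewrite integral_setU //; last 2 first.
- by apply/measurable_funU.
- apply/disj_setPS => y [/=]; rewrite 2!in_itv/= => /andP[_ yx] /andP[].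
  by rewrite ltNge yx.
rewrite IH2 integral_itv_bndoo // (eq_integral (cst (c K)%:E)); last first.
  move=> t; rewrite inE /= in_itv /= => /andP[t1 t2].
  by rewrite (hc K t).
rewrite integral_cst //.
have L : mu `](a + K%:R * d)%R, (a + K.+1%:R * d)%R[%classic = ((a + K.+1%:R * d) - (a + K%:R * d))%:E.
  by rewrite lebesgue_measure_itv /= lte_fin ltrD2l ltr_pM2r// ltr_nat ltnSn -EFinB.
rewrite [X in (_ * X)%E]L big_ord_recr /=.
have -> : a + K.+1%:R * d - (a + K%:R * d) = d.
  by rewrite opprD addrACA subrr add0r -mulrBl -natrB // subSnn mul1r.
by [].
Qed.
End Step.
Section Rad.
Variable R : realType.

Lemma sg_sin_itv (q : nat) (x : R) :
  q%:R * pi < x -> x < q.+1%:R * pi -> Num.sg (sin x) = (-1) ^+ q.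
Proof.
elim: q x => [|q IH] x x1 x2.
  by rewrite expr0 gtr0_sg // sin_gt0_pi // -(mul0r pi) x1 /= -(mul1r pi).
have -> : x = (x - pi) + pi by rewrite subrK.
rewrite sinDpi sgrN exprS (IH (x - pi)) ?mulN1r //.
  by rewrite ltrBrDr; move: x1; rewrite -natr1 mulrDl mul1r.
by rewrite ltrBlDr; move: x2; rewrite -(@natr1 R q.+1) mulrDl mul1r.
Qed.

Definition dmid (L k : nat) : R := (k%:R + 2^-1) / 2 ^+ L.

Lemma rad_piece (L a k : nat) (t : R) : (a <= L)%N ->
  k%:R / 2 ^+ L < t -> t < k.+1%:R / 2 ^+ L ->
  rademacher a t = (-1) ^+ (k %/ 2 ^ (L - a)).
Proof.
move=> aL t1 t2; rewrite /rademacher.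
set P : R := 2 ^+ (L - a).
have P0 : 0 < P by rewrite exprn_gt0.
have a0 : (0 : R) < 2 ^+ a by rewrite exprn_gt0.
have EL : (2 : R) ^+ L = 2 ^+ a * P by rewrite /P -exprD subnKC.
set q := (k %/ 2 ^ (L - a))%N.
have q1 : (q * 2 ^ (L - a) <= k)%N by apply: leq_trunc_div.
have q2 : (k < q.+1 * 2 ^ (L - a))%N by apply: ltn_ceil; rewrite expn_gt0.
have q1' : q%:R * P <= k%:R by rewrite /P -natrX -natrM ler_nat.
have q2' : k.+1%:R <= q.+1%:R * P by rewrite /P -natrX -natrM ler_nat.
apply: sg_sin_itv.
  rewrite -mulrA [pi * t]mulrC mulrA ltr_pM2r ?pi_gt0 //.
  apply: (le_lt_trans (y := k%:R / P)); first by rewrite ler_pdivlMr.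
  by move: t1; rewrite EL ltr_pdivrMr ?mulr_gt0 // ltr_pdivrMr // mulrA [t * _]mulrC.
rewrite -mulrA [pi * t]mulrC mulrA ltr_pM2r ?pi_gt0 //.
apply: (lt_le_trans (y := k.+1%:R / P)); last by rewrite ler_pdivrMr.
by move: t2; rewrite EL ltr_pdivlMr ?mulr_gt0 // ltr_pdivlMr // mulrA [t * _]mulrC.
Qed.

Lemma dmid_piece (L k : nat) :
  k%:R / 2 ^+ L < dmid L k /\ dmid L k < k.+1%:R / (2 : R) ^+ L.
Proof.
have P0 : (0 : R) < 2 ^+ L by rewrite exprn_gt0.
rewrite /dmid !ltr_pM2r ?invr_gt0 // ltrDl invr_gt0 ltr0n; split => //.
by rewrite -[k.+1%:R]natr1 ltrD2l invf_lt1 // ltr1n.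
Qed.

Lemma sum_double (f : nat -> R) M :
  \sum_(k < (2 * M)%N) f k = \sum_(k < M) (f k.*2 + f k.*2.+1).
Proof.
elim: M => [|M IH]; first by rewrite muln0 !big_ord0.
rewrite (_ : (2 * M.+1 = (2 * M).+2)%N); last by rewrite mulnS.
by rewrite !big_ord_recr /= IH -addrA mul2n.
Qed.

Lemma div2S (k e t : nat) : (e < 2)%N -> ((k.*2 + e) %/ 2 ^ t.+1 = k %/ 2 ^ t)%N.
Proof.
move=> e2; by rewrite expnS divnMA -muln2 divnMDl // (divn_small e2) addn0.
Qed.

Lemma sum_sign0 (s L t : nat) : (s < t)%N -> (t < L)%N ->
  \sum_(k < 2 ^ L) ((-1) ^+ (k %/ 2 ^ s + k %/ 2 ^ t)%N : R) = 0.
Proof.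
elim: s L t => [|s IH] L t st tL.
  case: L tL => [//|L] tL; case: t st tL => [//|t] _ tL.
  rewrite expnS (sum_double (fun k => (-1) ^+ (k %/ 2 ^ 0 + k %/ 2 ^ t.+1)%N)) big1 // => k _.
  rewrite expn0 !divn1 -[k.*2.+1]addn1 div2S // -[k.*2]addn0 div2S // !addn0.
  by rewrite addn1 addSn exprS mulN1r addrN.
case: L tL => [//|L] tL; case: t st tL => [//|t] st tL.
rewrite expnS (sum_double (fun k => (-1) ^+ (k %/ 2 ^ s.+1 + k %/ 2 ^ t.+1)%N)).
under eq_bigr => k _ do rewrite -[k.*2.+1]addn1 !div2S // -[k.*2]addn0 !div2S //.
by rewrite big_split /= (IH L t) // addr0.
Qed.

Lemma sum_sign (L s t : nat) : (s < L)%N -> (t < L)%N ->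
  \sum_(k < 2 ^ L) ((-1) ^+ (k %/ 2 ^ s + k %/ 2 ^ t)%N : R) = (2 ^ L)%:R * (s == t)%:R.
Proof.
move=> sL tL; case: (ltngtP s t) => [st|ts|<-].
- by rewrite sum_sign0 // mulr0.
- by under eq_bigr => k _ do rewrite addnC; rewrite sum_sign0 // mulr0.
- rewrite mulr1 (eq_bigr (fun _ => 1)); last first.
    by move=> k _; rewrite addnn -signr_odd odd_double.
  by rewrite sumr_const card_ord.
Qed.
Lemma rad_const (L a k : nat) (t : R) : (a <= L)%N ->
  k%:R / 2 ^+ L < t -> t < k.+1%:R / 2 ^+ L ->
  rademacher a t = rademacher a (dmid L k).
Proof.
move=> aL t1 t2; have [m1 m2] := dmid_piece L k.
by rewrite (rad_piece aL t1 t2) (rad_piece aL m1 m2).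
Qed.

Lemma rad_orth (L i j : nat) : (i < L)%N -> (j < L)%N ->
  \sum_(k < 2 ^ L) rademacher i.+1 (dmid L k) * rademacher j.+1 (dmid L k)
  = (2 ^ L)%:R * (i == j)%:R.
Proof.
move=> iL jL.
under eq_bigr => k _ do rewrite (rad_piece iL (proj1 (dmid_piece L k)) (proj2 (dmid_piece L k))) (rad_piece jL (proj1 (dmid_piece L k)) (proj2 (dmid_piece L k))) -exprD.
rewrite sum_sign; [|lia|lia].
by congr (_ * _%:R); apply/eqP/eqP; lia.
Qed.

Lemma int01_step (h : R -> R) (L : nat) :
  (forall k t, (k < 2 ^ L)%N -> k%:R / 2 ^+ L < t -> t < k.+1%:R / 2 ^+ L ->
     h t = h (dmid L k)) ->
  int01 (fun t => (h t)%:E) = (\sum_(k < 2 ^ L) h (dmid L k) / 2 ^+ L)%:E.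
Proof.
move=> hc.
have d0 : (0 : R) < (2 ^+ L)^-1 by rewrite invr_gt0 exprn_gt0.
have hc' : forall k t, (k < 2 ^ L)%N -> 0 + k%:R * (2 ^+ L)^-1 < t ->
    t < 0 + k.+1%:R * (2 ^+ L)^-1 -> h t = h (dmid L k).
  by move=> k t kL; rewrite !add0r; exact: hc.
have [_ H] := @step_integral R h 0 (2 ^+ L)^-1 (fun k => h (dmid L k)) (2 ^ L) d0 hc'.
have E : 0 + (2 ^ L)%:R * (2 ^+ L)^-1 = 1 :> R.
  by rewrite add0r natrX mulfV // expf_neq0.
by rewrite /int01 -H E.
Qed.
End Rad.
Section Dual.
Variable R : realType.
Variable X : normedModType R.

Lemma dual0 (f : X -> R) : is_dual f -> f 0 = 0.
Proof.
move=> [L _]; have := L 1 0 0; rewrite scaler0 addr0 mul1r.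
by move/(congr1 (fun v => v - f 0)); rewrite subrr addrK.
Qed.

Lemma dualD (f : X -> R) x y : is_dual f -> f (x + y) = f x + f y.
Proof. by move=> [L _]; have := L 1 x y; rewrite scale1r mul1r. Qed.

Lemma dualZ (f : X -> R) a x : is_dual f -> f (a *: x) = a * f x.
Proof. by move=> hf; have := proj1 hf a x 0; rewrite !addr0 (dual0 hf) addr0. Qed.

Lemma dual_sum (I : Type) (f : X -> R) (s : seq I) (c : I -> R) (v : I -> X) :
  is_dual f -> f (\sum_(j <- s) c j *: v j) = \sum_(j <- s) c j * f (v j).
Proof.
move=> hf; elim: s => [|j s IH]; first by rewrite !big_nil (dual0 hf).
by rewrite !big_cons dualD // dualZ // IH.
Qed.

Lemma dual_bounded (f : X -> R) : is_dual f ->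
  exists B, 0 < B /\ forall x, `|f x| <= B * `|x|.
Proof.
move=> hf; have c0 : f x @[x --> (0 : X)] --> (0 : R) by rewrite -(dual0 hf); exact: (proj2 hf 0).
have H : \forall t \near (0:X), `|f t| < 1 := cvgr0_norm_lt f c0 _ ltr01.
have [e /= e0 He] := proj1 (nbhs_norm0P (P := fun t => `|f t| < 1)) (H _).
exists (2 / e); split; first by rewrite divr_gt0.
move=> x; have [->|x0] := eqVneq x 0; first by rewrite (dual0 hf) !normr0 mulr0.
have nx : 0 < `|x| by rewrite normr_gt0.
set y := (e / 2 / `|x|) *: x.
have ny : `|y| < e.
  have cp : 0 <= e / 2 / `|x| by rewrite !divr_ge0 // ltW.
  rewrite /y normrZ (ger0_norm cp) divfK ?gt_eqF //.
  lra.
have cp : 0 < e / 2 / `|x| by rewrite !divr_gt0.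
have := He y ny; rewrite /y dualZ // normrM (ger0_norm (ltW cp)) => H1.
apply: ltW.
rewrite -(@ltr_pM2l _ (e / 2 / `|x|)) ?divr_gt0 //; apply: (lt_le_trans H1).
rewrite le_eqVlt; apply/orP; left; apply/eqP; field.
by apply/andP; split; rewrite gt_eqF.
Qed.

Lemma dual_le (f : X -> R) x : is_dual f -> `|x| <= 1 -> `|f x| <= dual_norm f.
Proof.
move=> hf x1; have [B [B0 HB]] := dual_bounded hf.
apply: ub_le_sup; last by exists x.
exists B => _ [y y1 <-]; apply: (le_trans (HB y)).
by rewrite ler_piMr // ltW.
Qed.

Lemma dual_norm_ge0 (f : X -> R) : is_dual f -> 0 <= dual_norm f.
Proof.
move=> hf; apply: le_trans (dual_le hf (x := 0) _); by rewrite ?normr0 ?normr_ge0.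
Qed.

Lemma dual_le_norm (f : X -> R) x : is_dual f -> `|f x| <= dual_norm f * `|x|.
Proof.
move=> hf; have [->|x0] := eqVneq x 0; first by rewrite (dual0 hf) !normr0 mulr0.
have nx : 0 < `|x| by rewrite normr_gt0.
have := @dual_le f (`|x|^-1 *: x) hf.
have ip : 0 <= `|x|^-1 by rewrite invr_ge0 ltW.
rewrite normrZ (ger0_norm ip) mulVf ?gt_eqF // lexx dualZ // => /(_ isT).
rewrite normrM (ger0_norm ip) => H.
by rewrite -ler_pdivrMr // mulrC.
Qed.

Lemma is_dual0 : is_dual (fun _ : X => 0 : R).
Proof. split; first by move=> *; rewrite mulr0 addr0. exact: cst_continuous. Qed.

Lemma is_dual_comb (f g : X -> R) a : is_dual f -> is_dual g ->
  is_dual (fun x => a * f x + g x).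
Proof.
move=> hf hg; split.
  by move=> b x y; rewrite dualD // dualZ // [g (_ + _)]dualD // dualZ //; ring.
move=> x; apply: (@continuousD _ _ _ (fun x => a * f x) g).
  by apply: (@continuousM _ _ (cst a) f) => //; [exact: cst_continuous| exact: (proj2 hf)].
exact: (proj2 hg).
Qed.

Lemma is_dualZ (f : X -> R) a : is_dual f -> is_dual (fun x => a * f x).
Proof.
move=> hf; have := is_dual_comb a hf is_dual0.
have -> : (fun x => a * f x + 0) = (fun x => a * f x) by apply/funext => x; rewrite addr0.
by [].
Qed.

Lemma is_dual_sum (I : Type) (s : seq I) (c : I -> R) (g : I -> X -> R) :
  (forall i, is_dual (g i)) -> is_dual (\sum_(i <- s) c i *: g i).
Proof.
move=> hg; elim: s => [|j s IH]; first by rewrite big_nil; exact: is_dual0.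
rewrite big_cons; exact: (is_dual_comb (c j) (hg j) IH).
Qed.

Lemma sum_fun_eval (I : Type) (s : seq I) (c : I -> R) (g : I -> X -> R) x :
  (\sum_(i <- s) c i *: g i) x = \sum_(i <- s) c i * g i x.
Proof.
elim: s => [|j s IH]; first by rewrite !big_nil.
by rewrite !big_cons -IH.
Qed.

Lemma dual_le_unit (f : X -> R) x : is_dual f ->
  (forall z, `|z| <= 1 -> `|f z| <= 1) -> `|f x| <= `|x|.
Proof.
move=> hf H; have [->|x0] := eqVneq x 0; first by rewrite (dual0 hf) !normr0.
have nx : 0 < `|x| by rewrite normr_gt0.
have ip : 0 <= `|x|^-1 by rewrite invr_ge0 ltW.
have := H (`|x|^-1 *: x).
rewrite normrZ (ger0_norm ip) mulVf ?gt_eqF // lexx dualZ // => /(_ isT).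
rewrite normrM (ger0_norm ip) => H1.
by rewrite -[X in _ <= X]mulr1 -ler_pdivrMl // mulrC.
Qed.

Lemma bidual_zero (Phi : (X -> R) -> R) : bidual_ball Phi -> Phi (fun _ => 0) = 0.
Proof.
move=> [L _]; have := L 1 _ _ is_dual0 is_dual0.
have -> : (fun x : X => 1 * 0 + 0) = (fun _ => 0 : R) by apply/funext => x; rewrite mulr0 addr0.
by rewrite mul1r => /(congr1 (fun v => v - Phi (fun _ => 0))); rewrite subrr addrK.
Qed.

Lemma bidual_scale (Phi : (X -> R) -> R) (f : X -> R) e : bidual_ball Phi -> is_dual f ->
  Phi (fun y => e * f y) = e * Phi f.
Proof.
move=> hP hf; have := proj1 hP e f _ hf is_dual0.
rewrite (bidual_zero hP) addr0 => <-.
by congr Phi; apply/funext => y; rewrite addr0.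
Qed.

Lemma eval_bidual (y : X) : `|y| <= 1 -> bidual_ball (fun f : X -> R => f y).
Proof. by move=> y1; split => // f hf; exact: dual_le. Qed.

End Dual.
Section LP.
Variable R : realType.

Lemma lp_term (p : R) (a : nat -> R) (i : nat) : 1 <= p ->
  (`|a i|%:E <= lp_seq (conj_exp p) a)%E.
Proof.
move=> p1; rewrite /conj_exp; case: ifPn => [_|p1n].
  by apply: ereal_sup_ubound; exists i.
have p1' : 1 < p by rewrite lt_neqAle eq_sym p1n.
set r := p / (p - 1).
have r0 : 0 < r by rewrite divr_gt0 ?subr_gt0 //; lra.
rewrite /lp_seq.
have -> : `|a i| = (`|a i| `^ r) `^ r^-1 by rewrite -powRrM mulfV ?gt_eqF // powRr1.
rewrite -poweR_EFin; apply: gt0_ler_poweR; first by rewrite invr_ge0 ltW.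
- by rewrite in_itv /= lee_fin powR_ge0 leey.
- by rewrite in_itv /= leey andbT; apply: nneseries_ge0 => n _; rewrite lee_fin powR_ge0.
apply: le_trans (nneseries_lim_ge (m := 0) i.+1 _); last by move=> n _ _; rewrite lee_fin powR_ge0.
rewrite big_nat_recr //= leeDr //; apply: sume_ge0 => n _; by rewrite lee_fin powR_ge0.
Qed.

Lemma lp_fin_le (p : R) (m : nat) (b : 'I_m -> R) (a : nat -> R) : 1 <= p ->
  (forall i : 'I_m, `|b i| <= `|a i|) ->
  ((lp_fin (conj_exp p) b)%:E <= lp_seq (conj_exp p) a)%E.
Proof.
move=> p1 ba; rewrite /conj_exp; case: ifPn => [_|p1n].
  rewrite /lp_fin /lp_seq.
  have S0 : (0 <= ereal_sup (range (fun i => (`|a i|)%:E)))%E.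
    apply: le_trans (ereal_sup_ubound _); [|by exists 0%N]. by rewrite lee_fin.
  elim/big_ind: _ => //.
    move=> x y Hx Hy; rewrite /Num.max; by case: ifP.
  move=> i _; apply: le_trans (ereal_sup_ubound _); last by exists (nat_of_ord i).
  by rewrite lee_fin ba.
have p1' : 1 < p by rewrite lt_neqAle eq_sym p1n.
set r := p / (p - 1).
have r0 : 0 < r by rewrite divr_gt0 ?subr_gt0 //; lra.
rewrite /lp_fin /lp_seq -poweR_EFin; apply: gt0_ler_poweR; first by rewrite invr_ge0 ltW.
- by rewrite in_itv /= lee_fin leey andbT sumr_ge0 // => i _; rewrite powR_ge0.
- by rewrite in_itv /= leey andbT; apply: nneseries_ge0 => n _; rewrite lee_fin powR_ge0.
apply: le_trans (nneseries_lim_ge (m := 0) m _); last by move=> n _ _; rewrite lee_fin powR_ge0.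
rewrite big_mkord sumEFin lee_fin; apply: ler_sum => i _.
by apply: ge0_ler_powR; rewrite ?nnegrE ?normr_ge0 ?(ltW r0) // ba.
Qed.
End LP.
Section Pair.
Variable R : realType.
Lemma amgm (a b c : R) : 0 < c -> a * b <= (a ^+ 2 / c + c * b ^+ 2) / 2.
Proof.
move=> c0; rewrite -subr_ge0.
have -> : (a ^+ 2 / c + c * b ^+ 2) / 2 - a * b = (a - c * b) ^+ 2 / (2 * c).
  by field; rewrite gt_eqF.
by rewrite divr_ge0 ?sqr_ge0 // mulr_ge0 // ltW.
Qed.
Lemma pairing_sum (K n N : nat) (r : nat -> nat -> R) (g : nat -> nat -> R) (M : R) :
  (forall i j, (i < n)%N -> (j < n)%N -> \sum_(k < K) r k i * r k j = M * (i == j)%:R) ->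
  \sum_(k < K) \sum_(i < n) r k i * \sum_(N <= j < n) r k j * g i j
  = M * \sum_(N <= j < n) g j j.
Proof.
move=> orth.
under eq_bigr => k _ do under eq_bigr => i _ do rewrite mulr_sumr.
rewrite exchange_big /=.
under eq_bigr => i _ do rewrite exchange_big /=.
rewrite mulr_sumr exchange_big /=.
rewrite [in RHS]big_nat_cond [in LHS]big_nat_cond.
apply: eq_bigr => j /andP[/andP[_ jn] _].
under eq_bigr => i _ do under eq_bigr => k _ do rewrite mulrA.
under eq_bigr => i _ do rewrite -mulr_suml (orth i j (ltn_ord i) jn).
rewrite (bigD1 (Ordinal jn)) //= eqxx mulr1 big1 ?addr0 //.
move=> i /negbTE ij; rewrite (_ : (nat_of_ord i == j) = false) ?mulr0 ?mul0r //.
Qed.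
End Pair.

Unset Implicit Arguments.

Theorem theorem2p1 (R : realType) (X Y : completeNormedModType R) (p : R)
  (u : {linear X -> Y}) :
  1 <= p -> continuous u ->
  almost_summing (V := Y -> R) (W := X -> R) (@is_dual R Y) (@bidual_ball R Y)
    (@dual_norm R X) (adjoint u) (conj_exp p) ->
  forall x : nat -> X, in_Rad x -> strongly_summable p (fun i => u (x i)).
Proof.
move=> p1 ucont [C [C0 HC]] x xR.
have [N HN] := xR 1 ltr01.
set H := \sum_(i < N) `|u (x i)|.
exists (H + (C + 1)) => ys ysd ysw.
have ysw' : forall Phi, bidual_ball Phi ->
    (lp_seq (conj_exp p) (fun i => Phi (ys i)) <= 1)%E.
  by move=> Phi hP; apply: le_trans ysw; apply: ereal_sup_ubound; exists Phi.
have yb : forall i z, `|ys i z| <= `|z|.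
  move=> i z; apply: dual_le_unit => // z' z1.
  rewrite -lee_fin; apply: le_trans (ysw' _ (eval_bidual z1)).
  exact: (lp_term (fun j => ys j z')).
have dcomp : forall g : Y -> R, is_dual g -> is_dual (adjoint u g).
  move=> g [gL gC]; split.
    by move=> a v w; rewrite /adjoint /= linearP /= gL.
  by move=> v; apply: continuous_comp; [exact: ucont| exact: gC].
have tail : forall n, (N <= n)%N ->
    \sum_(N <= i < n) `|ys i (u (x i))| <= C + 1.
  move=> n nN.
  pose e := fun i => if (N <= i)%N then Num.sg (ys i (u (x i))) else 0.
  pose zf := fun i => fun y : Y => e i * ys i y.
  have hz : forall i, is_dual (zf i) by move=> i; apply: is_dualZ.
  have hzu : forall i, is_dual (adjoint u (zf i)) by move=> i; apply: dcomp.
  have wf1 : (weak_fin (@bidual_ball R Y) (conj_exp p) (fun i : 'I_n => zf i) <= 1)%E.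
    apply/ereal_supP => _ [Phi hP <-].
    apply: le_trans (ysw' _ hP).
    apply: lp_fin_le => // i.
    rewrite /zf bidual_scale // normrM ler_piMl //.
    rewrite /e; case: ifP => _; last by rewrite normr0.
    by rewrite normr_sg lern1 leq_b1.
  have Crad : (rad_fin (@dual_norm R X) (fun i : 'I_n => adjoint u (zf i)) <= C%:E)%E.
    apply: le_trans (HC n (fun i => zf i) (fun i => hz i)) _.
    by rewrite -[X in (_ <= X)%E]mule1; apply: lee_wpmul2l => //; rewrite lee_fin.
  pose hF := fun t => (dual_norm (\sum_(i < n) rademacher i.+1 t *: adjoint u (zf i))) ^+ 2.
  have IF : int01 (fun t => (hF t)%:E) = (\sum_(k < 2 ^ n) hF (dmid R n k) / 2 ^+ n)%:E.
    apply: int01_step => k t kn t1 t2; rewrite /hF; congr (_ ^+ 2); congr dual_norm.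
    by apply: eq_bigr => i _; rewrite (rad_const _ t1 t2).
  pose hT := fun t => `| \sum_(N <= i < n) rademacher i.+1 t *: x i | ^+ 2.
  have IT : int01 (fun t => (hT t)%:E) = (\sum_(k < 2 ^ n) hT (dmid R n k) / 2 ^+ n)%:E.
    apply: int01_step => k t kn t1 t2; rewrite /hT; congr (`| _ | ^+ 2).
    by apply: eq_big_nat => i /andP[_ iN]; rewrite (rad_const _ t1 t2).
  have BT := HN N n (leqnn N) nN.
  rewrite -/hT IT lee_fin in BT.
  have BF : (sqrte (int01 (fun t => (hF t)%:E)) <= C%:E)%E := Crad.
  rewrite IF /= lee_fin in BF.
  pose c := C + 1.
  have c0 : 0 < c by rewrite /c; lra.
  pose F k := \sum_(i < n) rademacher i.+1 (dmid R n k) *: adjoint u (zf i).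
  pose T k := \sum_(N <= j < n) rademacher j.+1 (dmid R n k) *: x j.
  have E1 : forall k, F k (T k) = \sum_(i < n) rademacher i.+1 (dmid R n k) *
      \sum_(N <= j < n) rademacher j.+1 (dmid R n k) * adjoint u (zf i) (x j).
    move=> k; rewrite /F sum_fun_eval; apply: eq_bigr => i _; by rewrite /T dual_sum.
  have key : \sum_(k < 2 ^ n) F k (T k) =
      (2 ^ n)%:R * \sum_(N <= j < n) `|ys j (u (x j))|.
    under eq_bigr => k _ do rewrite E1.
    rewrite (@pairing_sum R (2 ^ n) n N (fun k i => rademacher i.+1 (dmid R n k))
      (fun i j => adjoint u (zf i) (x j)) (2 ^ n)%:R); last first.
      by move=> i j i_n j_n; exact: rad_orth.
    congr (_ * _); apply: eq_big_nat => j /andP[Nj _].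
    by rewrite /adjoint /zf /e /= Nj -normrEsg.
  have pw : forall k, F k (T k) <= (hF (dmid R n k) / c + c * hT (dmid R n k)) / 2.
    move=> k; rewrite /hF /hT -/(F k) -/(T k).
    apply: le_trans (amgm _ _ c0).
    apply: le_trans (ler_norm _) _.
    apply: dual_le_norm; rewrite /F; apply: is_dual_sum => i; exact: hzu.
  pose P : R := 2 ^+ n.
  have P0 : 0 < P by rewrite exprn_gt0.
  have eP : (2 ^ n)%:R = P by rewrite natrX.
  set SF := \sum_(k < 2 ^ n) hF (dmid R n k).
  set ST := \sum_(k < 2 ^ n) hT (dmid R n k).
  have hF0 : forall t, 0 <= hF t by move=> t; rewrite /hF sqr_ge0.
  have SF0 : 0 <= SF by rewrite sumr_ge0.
  have eF : \sum_(k < 2 ^ n) hF (dmid R n k) / 2 ^+ n = SF / P by rewrite mulr_suml.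
  have eT : \sum_(k < 2 ^ n) hT (dmid R n k) / 2 ^+ n = ST / P by rewrite mulr_suml.
  rewrite eF in BF; rewrite eT in BT.
  have A0 : 0 <= SF / P by rewrite divr_ge0 // ltW.
  have AC : SF / P <= C ^+ 2.
    have s0 := sqrtr_ge0 (SF / P).
    rewrite -(sqr_sqrtr A0); move: BF s0; set s := Num.sqrt _ => BF s0.
    by rewrite ler_pXn2r // nnegrE.
  have SFb : SF <= C ^+ 2 * P by move: AC; rewrite ler_pdivrMr.
  have STb : ST <= P by move: BT; rewrite ler_pdivrMr // mul1r.
  have sum_pw : \sum_(k < 2 ^ n) F k (T k) <= (SF / c + c * ST) / 2.
    apply: (le_trans (y := \sum_(k < 2 ^ n) (hF (dmid R n k) / c + c * hT (dmid R n k)) / 2)).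
      by apply: ler_sum => k _; exact: pw.
    by rewrite -mulr_suml big_split /= -mulr_suml -mulr_sumr.
  rewrite key eP in sum_pw.
  have h1 : SF / c <= c * P.
    rewrite ler_pdivrMr //; apply: le_trans SFb _.
    have Cc : C <= c by rewrite /c; lra.
    have -> : c * P * c = c ^+ 2 * P by rewrite expr2 mulrAC.
    rewrite ler_pM2r // ler_pXn2r // ?nnegrE //; rewrite /c; lra.
  have h2 : c * ST <= c * P by rewrite ler_pM2l.
  have h3 : P * \sum_(N <= j < n) `|ys j (u (x j))| <= P * c by lra.
  by rewrite ler_pM2l in h3.
apply: lime_le.
  by apply: is_cvg_nneseries => i _ _; rewrite lee_fin.
near=> n.
have nN : (N <= n)%N by near: n; exists N.
rewrite sumEFin lee_fin (big_cat_nat (leq0n N) nN) /=.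
apply: lerD; last exact: tail.
rewrite /H big_mkord; apply: ler_sum => i _; exact: yb.
Unshelve. all: by end_near.
Qed.
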